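(* Let $k\in\{1,2,\dots\}\cup\{\infty\}$. The group $D^k_{\mathrm{nb}}(\mathbb{R},0)$ is a normal subgroup of $H^k(\mathbb{R},0)$.
   Context: $H^k(\mathbb{R},0)$ is the group of homeomorphisms $h$ of $\mathbb{R}$ with $h(0)=0$ whose restriction to $\mathbb{R}\setminus\{0\}$ is a $C^k$-diffeomorphism of $\mathbb{R}\setminus\{0\}$. $D^k_{\mathrm{nb}}(\mathbb{R},0)$ is the group of $C^k$-diffeomorphisms of $\mathbb{R}$ that are the identity on some neighborhood of $0$. *)

(* Defs.v *)
From Stdlib Require Import Reals.
From Coquelicot Require Import Coquelicot.
Open Scope R_scope.

Inductive regularity := Fin (n : nat) | Infty.

Definition reg_ge1 (k : regularity) : Prop :=
  match k with Fin n => (1 <= n)%nat | Infty => True end.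

(* f is C^n on the open set U: the iterated derivatives up to order n exist
   on U and the n-th derivative is continuous on U.  (Derive is local, so on
   an open set Derive_n f j agrees with the genuine j-th derivative.) *)
Definition Cn_on (n : nat) (U : R -> Prop) (f : R -> R) : Prop :=
  (forall x, U x -> forall j, (j < n)%nat -> ex_derive (Derive_n f j) x) /\
  (forall x, U x -> continuous (Derive_n f n) x).

Definition Ck_on (k : regularity) (U : R -> Prop) (f : R -> R) : Prop :=
  match k with
  | Fin n => Cn_on n U f
  | Infty => forall n, Cn_on n U f
  end.

Definition allR (x : R) : Prop := True.
Definition nonzero (x : R) : Prop := x <> 0.

Definition is_inverse (f g : R -> R) : Prop :=
  (forall x, g (f x) = x) /\ (forall y, f (g y) = y).

(* (h, hi) ∈ H^k(R,0): h homeomorphism of R with inverse hi, h 0 = 0, and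
   the restriction of h to R\{0} is a C^k diffeomorphism of R\{0}
   (i.e. h and hi are C^k on R\{0}). *)
Definition Hk (k : regularity) (h hi : R -> R) : Prop :=
  is_inverse h hi /\
  (forall x, continuous h x) /\ (forall x, continuous hi x) /\
  h 0 = 0 /\
  Ck_on k nonzero h /\ Ck_on k nonzero hi.

Definition Dnb (k : regularity) (f fi : R -> R) : Prop :=
  is_inverse f fi /\
  Ck_on k allR f /\ Ck_on k allR fi /\
  exists e, 0 < e /\ forall x, Rabs x < e -> f x = x.

Definition fcomp (f g : R -> R) : R -> R := fun x => f (g x).
Definition idR : R -> R := fun x => x.

(* Main.v *)
Require Import Defs.
From Stdlib Require Import Reals FunctionalExtensionality Lia Lra.
From Coquelicot Require Import Coquelicot.
Open Scope R_scope.

Definition LC (n : nat) (f : R -> R) (x : R) : Prop :=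
  locally x (fun y => (forall j, (j < n)%nat -> ex_derive (Derive_n f j) y) /\
                      continuous (Derive_n f n) y).

Lemma DnS (f : R -> R) j : Derive_n f (S j) = Derive_n (Derive f) j.
Proof.
  induction j; apply functional_extensionality; intro y; [reflexivity|].
  change (Derive (Derive_n f (S j)) y = Derive (Derive_n (Derive f) j) y). now rewrite IHj.
Qed.

Lemma LC_ext n f g x : locally x (fun t => f t = g t) -> LC n f x -> LC n g x.
Proof.
  intros H L.
  assert (H2 := locally_locally _ _ (locally_locally _ _ H)).
  unfold LC in *. generalize (filter_and _ _ H2 L).
  apply filter_imp. intros y [Hy [A B]].
  assert (E : forall j, locally y (fun t => Derive_n f j t = Derive_n g j t)).
  { intro j. apply (filter_imp _ _ (fun t Ht => Derive_n_ext_loc f g j t Ht) Hy). }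
  split.
  - intros j Hj. apply (ex_derive_ext_loc _ _ _ (E j)), A, Hj.
  - exact (continuous_ext_loc (Derive_n g n) (Derive_n f n) y (E n) B).
Qed.

Lemma LC_S n f x : LC (S n) f x <-> locally x (ex_derive f) /\ LC n (Derive f) x.
Proof.
  unfold LC; split.
  - intros L; split.
    + apply (filter_imp _ _ (fun y Hy => proj1 Hy 0%nat (Nat.lt_0_succ _)) L).
    + revert L. apply filter_imp. intros y [A B]. split.
      * intros j Hj. rewrite <- DnS. apply A. lia.
      * rewrite <- DnS. exact B.
  - intros [A B]. generalize (filter_and _ _ A B). apply filter_imp.
    intros y [Ay [By Cy]]. split.
    + intros [|j] Hj; [exact Ay|]. rewrite DnS. apply By. lia.
    + rewrite DnS. exact Cy.
Qed.

Lemma LC_lower n f x : LC (S n) f x -> LC n f x.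
Proof.
  unfold LC. apply filter_imp. intros y [A B]. split.
  - intros j Hj. apply A. lia.
  - apply (ex_derive_continuous (Derive_n f n)). apply A. lia.
Qed.

Lemma LC_0 n f x : LC n f x -> locally x (continuous f).
Proof.
  induction n; intro L.
  - apply (filter_imp _ _ (fun y Hy => proj2 Hy) L).
  - apply IHn, LC_lower, L.
Qed.

Lemma LC_const n c x : LC n (fun _ => c) x.
Proof.
  revert c x; induction n; intros c x.
  - exists (mkposreal 1 Rlt_0_1). intros y _. split; [intros; lia|].
    apply continuous_const.
  - apply LC_S. split.
    + exists (mkposreal 1 Rlt_0_1). intros y _. apply ex_derive_const.
    + replace (Derive (fun _ => c)) with (fun _ : R => 0).
      * apply IHn.
      * apply functional_extensionality. intro; now rewrite Derive_const.
Qed.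

Lemma LC_id n x : LC n (fun t => t) x.
Proof.
  destruct n.
  - exists (mkposreal 1 Rlt_0_1). intros y _. split; [intros; lia|].
    apply continuous_id.
  - apply LC_S. split.
    + exists (mkposreal 1 Rlt_0_1). intros y _. apply ex_derive_id.
    + replace (Derive (fun t => t)) with (fun _ : R => 1).
      * apply LC_const.
      * apply functional_extensionality. intro; now rewrite Derive_id.
Qed.

Lemma LC_plus n f g x : LC n f x -> LC n g x -> LC n (fun t => f t + g t) x.
Proof.
  revert f g x; induction n; intros f g x Lf Lg.
  - unfold LC in *. generalize (filter_and _ _ Lf Lg). apply filter_imp.
    intros y [[_ A] [_ B]]. split; [intros; lia|].
    apply (continuous_plus f g y A B).
  - apply LC_S in Lf as [Ef Lf]. apply LC_S in Lg as [Eg Lg].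
    apply LC_S. split.
    + generalize (filter_and _ _ Ef Eg). apply filter_imp.
      intros y [A B]. apply (ex_derive_plus f g y A B).
    + apply (LC_ext _ (fun t => Derive f t + Derive g t)).
      * generalize (filter_and _ _ Ef Eg). apply filter_imp.
        intros y [A B]. symmetry. apply (Derive_plus f g y A B).
      * apply IHn; assumption.
Qed.

Lemma LC_mult n f g x : LC n f x -> LC n g x -> LC n (fun t => f t * g t) x.
Proof.
  revert f g x; induction n; intros f g x Lf Lg.
  - unfold LC in *. generalize (filter_and _ _ Lf Lg). apply filter_imp.
    intros y [[_ A] [_ B]]. split; [intros; lia|].
    apply (continuous_mult f g y A B).
  - assert (Lf' := LC_lower _ _ _ Lf). assert (Lg' := LC_lower _ _ _ Lg).
    apply LC_S in Lf as [Ef Lf]. apply LC_S in Lg as [Eg Lg].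
    apply LC_S. split.
    + generalize (filter_and _ _ Ef Eg). apply filter_imp.
      intros y [A B]. apply (ex_derive_mult f g y A B).
    + apply (LC_ext _ (fun t => Derive f t * g t + f t * Derive g t)).
      * generalize (filter_and _ _ Ef Eg). apply filter_imp.
        intros y [A B]. symmetry. apply (Derive_mult f g y A B).
      * apply LC_plus; apply IHn; assumption.
Qed.

Lemma LC_comp n f g x : LC n g x -> LC n f (g x) -> LC n (fun t => f (g t)) x.
Proof.
  revert f g x; induction n; intros f g x Lg Lf.
  - assert (Cg : continuous g x) by exact (proj2 (locally_singleton _ _ Lg)).
    assert (P := Cg _ Lf). simpl in P.
    unfold LC in *. generalize (filter_and _ _ Lg P). apply filter_imp.
    intros y [[_ A] [_ B]]. split; [intros; lia|].
    apply (continuous_comp g f y A B).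
  - assert (Cg : continuous g x) by exact (locally_singleton _ _ (LC_0 _ _ _ Lg)).
    assert (Lg' := LC_lower _ _ _ Lg).
    apply LC_S in Lf as [Ef Lf]. apply LC_S in Lg as [Eg Lg].
    assert (P := Cg _ Ef). simpl in P.
    apply LC_S. split.
    + generalize (filter_and _ _ Eg P). apply filter_imp.
      intros y [A B]. apply (ex_derive_comp f g y B A).
    + apply (LC_ext _ (fun t => Derive g t * Derive f (g t))).
      * generalize (filter_and _ _ Eg P). apply filter_imp.
        intros y [A B]. symmetry. apply (Derive_comp f g y B A).
      * apply LC_mult; [assumption|]. apply IHn; assumption.
Qed.
Definition Lk (k : regularity) f x : Prop :=
  match k with Fin n => LC n f x | Infty => forall n, LC n f x end.

Lemma Ck_Lk k (U : R -> Prop) f : open U ->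
  (Ck_on k U f <-> forall x, U x -> Lk k f x).
Proof.
  intros HU.
  assert (G : forall n, Cn_on n U f <-> forall x, U x -> LC n f x).
  { intro n; unfold Cn_on, LC; split.
    - intros [A B] x Ux. apply (filter_imp U); [|exact (HU x Ux)].
      intros y Uy. split; [intros; apply A; auto | apply B, Uy].
    - intros H; split.
      + intros x Ux j Hj. exact (proj1 (locally_singleton _ _ (H x Ux)) j Hj).
      + intros x Ux. exact (proj2 (locally_singleton _ _ (H x Ux))). }
  destruct k as [n|]; simpl.
  - apply G.
  - split.
    + intros H x Ux n. apply (G n); auto.
    + intros H n. apply G. intros x Ux. apply H, Ux.
Qed.

Lemma open_allR : open allR.
Proof. intros x _. exists (mkposreal 1 Rlt_0_1). intros; exact I. Qed.
Lemma open_nonzero : open Defs.nonzero.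
Proof. exact (open_neq 0). Qed.

Lemma Lk_comp k f g x : Lk k g x -> Lk k f (g x) -> Lk k (fun t => f (g t)) x.
Proof. destruct k; simpl; intros; apply LC_comp; auto. Qed.
Lemma Lk_id k x : Lk k (fun t => t) x.
Proof. destruct k; simpl; intros; apply LC_id. Qed.
Lemma Lk_ext k f g x : locally x (fun t => f t = g t) -> Lk k f x -> Lk k g x.
Proof. destruct k; simpl; intros; [|]; eapply LC_ext; eauto. Qed.
Lemma Lk_cont k f x : Lk k f x -> continuous f x.
Proof.
  destruct k; simpl; intro H.
  - exact (locally_singleton _ _ (LC_0 _ _ _ H)).
  - exact (locally_singleton _ _ (LC_0 _ _ _ (H 0%nat))).
Qed.

Ltac toL H := let H' := fresh in
  first [ pose proof (proj1 (Ck_Lk _ _ _ open_nonzero) H) as H'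
        | pose proof (proj1 (Ck_Lk _ _ _ open_allR) H) as H' ]; clear H; rename H' into H.

Lemma inj_nz f fi x : is_inverse f fi -> f 0 = 0 -> x <> 0 -> f x <> 0.
Proof. intros [A B] H0 Hx E. apply Hx. rewrite <- (A x), E. rewrite <- H0 at 1. apply A. Qed.

Lemma Hk_comp k h hi g gi : Hk k h hi -> Hk k g gi -> Hk k (fcomp h g) (fcomp gi hi).
Proof.
  intros (Ih & ch & chi & h0 & Ch & Chi) (Ig & cg & cgi & g0 & Cg & Cgi).
  toL Ch; toL Chi; toL Cg; toL Cgi.
  assert (hi0 : hi 0 = 0) by (rewrite <- h0 at 1; apply (proj1 Ih)).
  assert (gi0 : gi 0 = 0) by (rewrite <- g0 at 1; apply (proj1 Ig)).
  unfold Hk, fcomp. split; [|split; [|split; [|split; [|split]]]].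
  - destruct Ih as [A B], Ig as [C D]. split; intro x.
    + now rewrite A, C.
    + now rewrite D, B.
  - intro x. apply (continuous_comp g h); auto.
  - intro x. apply (continuous_comp hi gi); auto.
  - now rewrite g0, h0.
  - apply (Ck_Lk _ _ _ open_nonzero). intros x Hx. apply Lk_comp; auto.
    apply Ch. apply (inj_nz g gi); auto.
  - apply (Ck_Lk _ _ _ open_nonzero). intros x Hx. apply Lk_comp; auto.
    apply Cgi. apply (inj_nz hi h); auto. destruct Ih as [A B]; split; auto.
Qed.

Lemma Hk_inv k h hi : Hk k h hi -> Hk k hi h.
Proof.
  intros ([A B] & ch & chi & h0 & Ch & Chi).
  repeat split; auto. rewrite <- h0 at 1; apply A.
Qed.

Lemma Hk_id k : Hk k idR idR.
Proof.
  repeat split; try (intro; apply continuous_id).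
  all: try (apply (Ck_Lk _ _ _ open_nonzero); intros; apply Lk_id).
Qed.

Lemma Dnb_Hk k f fi : Dnb k f fi -> Hk k f fi.
Proof.
  intros (Iv & Cf & Cfi & e & He & Hid).
  toL Cf; toL Cfi.
  repeat split; try apply Iv.
  - intro x. apply (Lk_cont k). apply Cf. exact I.
  - intro x. apply (Lk_cont k). apply Cfi. exact I.
  - apply Hid. rewrite Rabs_R0. exact He.
  - apply (Ck_Lk _ _ _ open_nonzero). intros; apply Cf; exact I.
  - apply (Ck_Lk _ _ _ open_nonzero). intros; apply Cfi; exact I.
Qed.

Lemma Dnb_id k : Dnb k idR idR.
Proof.
  split; [split; reflexivity|]. split; [|split].
  - apply (Ck_Lk _ _ _ open_allR). intros; apply Lk_id.
  - apply (Ck_Lk _ _ _ open_allR). intros; apply Lk_id.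
  - exists 1. split; [lra|]. reflexivity.
Qed.

Lemma Dnb_comp k f fi g gi : Dnb k f fi -> Dnb k g gi -> Dnb k (fcomp f g) (fcomp gi fi).
Proof.
  intros ([A B] & Cf & Cfi & e1 & He1 & H1) ([C D] & Cg & Cgi & e2 & He2 & H2).
  toL Cf; toL Cfi; toL Cg; toL Cgi.
  unfold fcomp. split; [split; intro x|split; [|split]].
  - now rewrite A, C.
  - now rewrite D, B.
  - apply (Ck_Lk _ _ _ open_allR). intros x _. apply Lk_comp; [apply Cg|apply Cf]; exact I.
  - apply (Ck_Lk _ _ _ open_allR). intros x _. apply Lk_comp; [apply Cfi|apply Cgi]; exact I.
  - exists (Rmin e1 e2). split; [apply Rmin_pos; auto|].
    intros x Hx. rewrite H2 by (eapply Rlt_le_trans; [exact Hx| apply Rmin_r]).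
    apply H1. eapply Rlt_le_trans; [exact Hx| apply Rmin_l].
Qed.

Lemma Dnb_inv k f fi : Dnb k f fi -> Dnb k fi f.
Proof.
  intros ([A B] & Cf & Cfi & e & He & H).
  split; [split; auto|]. split; [auto|split; [auto|]].
  exists e. split; auto. intros x Hx. rewrite <- (H x Hx) at 1. apply A.
Qed.

Lemma Dnb_normal k h hi f fi : Hk k h hi -> Dnb k f fi ->
     Dnb k (fcomp h (fcomp f hi)) (fcomp h (fcomp fi hi)).
Proof.
  intros HH HD.
  assert (Key : forall f fi, Dnb k f fi -> Ck_on k allR (fcomp h (fcomp f hi))).
  { clear f fi HD. intros f fi HD.
    destruct HH as ([A B] & ch & chi & h0 & Ch & Chi).
    destruct HD as ([C D] & Cf & Cfi & e & He & H).
    toL Ch; toL Chi; toL Cf.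
    assert (hi0 : hi 0 = 0) by (rewrite <- h0 at 1; apply A).
    assert (f0 : f 0 = 0) by (apply H; rewrite Rabs_R0; exact He).
    apply (Ck_Lk _ _ _ open_allR). intros x _. unfold fcomp.
    destruct (Req_dec x 0) as [->|Hx].
    - apply (Lk_ext k (fun t => t)); [|apply Lk_id].
      assert (P := chi 0 (fun y => Rabs y < e)). rewrite hi0 in P.
      assert (Q : locally 0 (fun y => Rabs y < e)).
      { exists (mkposreal e He). intros y Hy. 
        change (Rabs (y - 0) < e) in Hy. now rewrite Rminus_0_r in Hy. }
      specialize (P Q). unfold filtermap in P. revert P. apply filter_imp.
      intros t Ht. rewrite (H _ Ht). symmetry. apply B.
    - assert (Hy : hi x <> 0) by (apply (inj_nz hi h); auto; split; auto).
      apply (Lk_comp k h (fun t => f (hi t))).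
      + apply (Lk_comp k f hi); auto. apply Cf. exact I.
      + apply Ch. apply (inj_nz f fi); auto. split; auto. }
  split; [|split; [|split]].
  - destruct HH as ([A B] & _), HD as ([C D] & _). unfold fcomp. split; intro x.
    + now rewrite A, C, B.
    + now rewrite A, D, B.
  - now apply (Key f fi).
  - apply (Key fi f). now apply Dnb_inv.
  - destruct HD as (_ & _ & _ & e & He & H).
    destruct HH as ([A B] & ch & chi & h0 & _).
    assert (hi0 : hi 0 = 0) by (rewrite <- h0 at 1; apply A).
    (* need a uniform e' : use continuity of hi at 0 *)
    assert (P := chi 0 (fun y => Rabs y < e)). rewrite hi0 in P.
    assert (Q : locally 0 (fun y => Rabs y < e)).
    { exists (mkposreal e He). intros y Hy.
      change (Rabs (y - 0) < e) in Hy. now rewrite Rminus_0_r in Hy. }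
    specialize (P Q). unfold filtermap in P. destruct P as [d Hd].
    exists d. split; [apply cond_pos|]. intros x Hx. unfold fcomp.
    assert (Hb : ball 0 d x) by (change (Rabs (x - 0) < d); now rewrite Rminus_0_r).
    rewrite (H _ (Hd x Hb)). apply B.
Qed.

Theorem lemma5p7 (k : regularity) (hk : reg_ge1 k) :
  (Hk k idR idR /\
   (forall h hi g gi, Hk k h hi -> Hk k g gi -> Hk k (fcomp h g) (fcomp gi hi)) /\
   (forall h hi, Hk k h hi -> Hk k hi h)) /\
  (forall f fi, Dnb k f fi -> Hk k f fi) /\
  Dnb k idR idR /\
  (forall f fi g gi, Dnb k f fi -> Dnb k g gi -> Dnb k (fcomp f g) (fcomp gi fi)) /\
  (forall f fi, Dnb k f fi -> Dnb k fi f) /\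
  (forall h hi f fi, Hk k h hi -> Dnb k f fi ->
     Dnb k (fcomp h (fcomp f hi)) (fcomp h (fcomp fi hi))).
Proof.
  split; [split; [apply Hk_id|split; [apply Hk_comp|apply Hk_inv]]|].
  split; [apply Dnb_Hk|]. split; [apply Dnb_id|]. split; [apply Dnb_comp|].
  split; [apply Dnb_inv|apply Dnb_normal].
Qed.
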